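(* For every integer $n\ge 1$, let $T_n$ be the triangular grid graph with $n$ rows of triangles and let $a,b$ be two distinct vertices of $T_n$ of degree $2$. Then, with unit edge resistances, \[ r_{T_n}(a,b)\ \ge\ \frac12\left(1+\frac12+\frac13+\cdots+\frac1n\right). \] In particular $r_{T_n}(a,b)\to\infty$ as $n\to\infty$.
   Context: The triangular grid graph $T_n$ has vertex set $\{(i,j): 0\le j\le i\le n\}$ (so $(n+1)(n+2)/2$ vertices, arranged in rows $i=0,\dots,n$), and edges $\{(i,j),(i,j+1)\}$, $\{(i,j),(i+1,j)\}$ and $\{(i,j),(i+1,j+1)\}$ whenever both endpoints are vertices. Its degree-2 vertices are the three corners $(0,0)$, $(n,0)$, $(n,n)$. Each edge has resistance $1$. The resistance distance $r_G(u,v)$ is the potential difference between $u$ and $v$ when one unit of current enters at $u$ and leaves at $v$; equivalently $r_G(u,v)=(\mathbf e_u-\mathbf e_v)^T L^\dagger(\mathbf e_u-\mathbf e_v)$ with $L$ the combinatorial Laplacian of $G$. *)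

(* Defs.v *)
From HB Require Import structures.
From mathcomp Require Import all_boot all_order all_algebra.
Set Implicit Arguments. Unset Strict Implicit. Unset Printing Implicit Defensive.
Import Order.TTheory GRing.Theory Num.Theory.
Local Open Scope ring_scope.

Definition tri_vertex (n : nat) : Type :=
  {p : 'I_n.+1 * 'I_n.+1 | (p.2 <= p.1)%N}.

Definition tri_step (p q : nat * nat) : bool :=
  [|| (q.1 == p.1) && (q.2 == p.2.+1),
      (q.1 == p.1.+1) && (q.2 == p.2)
    | (q.1 == p.1.+1) && (q.2 == p.2.+1)].

Definition tri_adj (n : nat) (u v : tri_vertex n) : bool :=
  let pu := (nat_of_ord (sval u).1, nat_of_ord (sval u).2) in
  let pv := (nat_of_ord (sval v).1, nat_of_ord (sval v).2) in
  tri_step pu pv || tri_step pv pu.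

Definition tri_deg (n : nat) (v : tri_vertex n) : nat :=
  #|[set w : tri_vertex n | tri_adj v w]|.

Definition tri_lap (R : nzRingType) (n : nat) (phi : tri_vertex n -> R)
  (v : tri_vertex n) : R :=
  \sum_(w : tri_vertex n | tri_adj v w) (phi v - phi w).

Definition unit_current_potential (R : nzRingType) (n : nat)
  (a b : tri_vertex n) (phi : tri_vertex n -> R) : Prop :=
  forall v, tri_lap phi v = (v == a)%:R - (v == b)%:R.

(* Resistance distance r(a,b) >= c: the potential difference phi a - phi b
   for the (unique up to constants) potential of a unit a->b current. *)
Definition resistance_ge (R : numDomainType) (n : nat)
  (a b : tri_vertex n) (c : R) : Prop :=
  (exists phi : tri_vertex n -> R, unit_current_potential a b phi) /\
  (forall phi, unit_current_potential a b phi -> c <= phi a - phi b).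

Definition harmonic (R : fieldType) (n : nat) : R :=
  \sum_(1 <= k < n.+1) (k%:R)^-1.

(* Main.v *)
Require Import Defs.
From HB Require Import structures.
From mathcomp Require Import all_boot all_order all_algebra.
From mathcomp Require Import zify ring lra.
Set Implicit Arguments. Unset Strict Implicit. Unset Printing Implicit Defensive.
Import Order.TTheory GRing.Theory Num.Theory.
Local Open Scope ring_scope.


Section Gen.
Variables (R : realFieldType) (V : finType) (adj : rel V).
Hypothesis adjC : symmetric adj.

Definition glap (phi : V -> R) v := \sum_(w | adj v w) (phi v - phi w).

Lemma swap_pairs (P : pred (V * V)) (F : V * V -> R) :
  \sum_(p | P p) F p = \sum_(p | P (p.2, p.1)) F (p.2, p.1).
Proof.
rewrite (reindex_inj (h := fun p : V * V => (p.2, p.1))) //.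
by move=> [x y] [x' y'] /= [-> ->].
Qed.

Lemma sum_sub (T : finType) (P Q : pred T) (f : T -> R) :
  (forall i, P i -> Q i) -> (forall i, Q i -> 0 <= f i) ->
  \sum_(i | P i) f i <= \sum_(i | Q i) f i.
Proof.
move=> PQ f0; rewrite [X in X <= _]big_mkcond [X in _ <= X]big_mkcond /=.
apply: ler_sum => i _; case: (boolP (P i)) => Pi; first by rewrite (PQ _ Pi).
by case: (boolP (Q i)) => // Qi; apply: f0.
Qed.

Lemma energy (phi : V -> R) :
  (\sum_u phi u * glap phi u) *+ 2 =
  \sum_(p | adj p.1 p.2) (phi p.1 - phi p.2) ^+ 2.
Proof.
have E : \sum_u phi u * glap phi u = \sum_(p | adj p.1 p.2) phi p.1 * (phi p.1 - phi p.2).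
  rewrite -(pair_big_dep xpredT (fun u w => adj u w) (fun u w => phi u * (phi u - phi w))) /=.
  by apply: eq_bigr => u _; rewrite /glap mulr_sumr.
rewrite E mulr2n [X in _ + X = _](swap_pairs (fun p => adj p.1 p.2)) /=.
rewrite [X in _ + X](eq_bigl (fun p => adj p.1 p.2)); last by move=> p; rewrite adjC.
rewrite -big_split /=; apply: eq_bigr => p _; ring.
Qed.

Lemma flow (S : pred V) (phi : V -> R) :
  \sum_(u | S u) glap phi u =
  \sum_(p | S p.1 && (adj p.1 p.2 && ~~ S p.2)) (phi p.1 - phi p.2).
Proof.
rewrite -(pair_big_dep S (fun u w => adj u w && ~~ S w) (fun u w => phi u - phi w)) /=.
have -> : \sum_(u | S u) glap phi u =
   \sum_(u | S u) \sum_(w | adj u w && S w) (phi u - phi w) +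
   \sum_(u | S u) \sum_(w | adj u w && ~~ S w) (phi u - phi w).
  by rewrite -big_split /=; apply: eq_bigr => u _; rewrite /glap (bigID S) /=.
set X := \sum_(u | S u) _.
suff -> : X = 0 by rewrite add0r.
have : X = - X.
  rewrite {1}/X pair_big_dep /= (swap_pairs (fun p => S p.1 && (adj p.1 p.2 && S p.2))) /=.
  rewrite /X pair_big_dep -sumrN; apply: eq_big => [p|p _] /=; last by rewrite opprB.
  by rewrite adjC; case: (S p.1); case: (S p.2); case: (adj _ _).
move/eqP; rewrite -subr_eq0 opprK -mulr2n mulrn_eq0 /= => /eqP //.
Qed.

Lemma cauchy (T : finType) (P : pred T) (x : T -> R) :
  (\sum_(i | P i) x i) ^+ 2 <= #|P|%:R * \sum_(i | P i) x i ^+ 2.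
Proof.
set s := \sum_(i | P i) x i; set q := \sum_(i | P i) x i ^+ 2; set c : R := #|P|%:R.
have H : 0 <= \sum_(i | P i) \sum_(j | P j) (x i - x j) ^+ 2.
  by apply: sumr_ge0 => i _; apply: sumr_ge0 => j _; apply: sqr_ge0.
have E1 : forall i, \sum_(j | P j) (x i - x j) ^+ 2 =
     x i ^+ 2 * c - 2 * (x i * s) + q.
  move=> i; transitivity (\sum_(j | P j) (x i ^+ 2 - 2 * (x i * x j) + x j ^+ 2)).
    by apply: eq_bigr => j _; ring.
  by rewrite big_split sumrB /= sumr_const -!mulr_sumr -/s -/q /c mulr_natr.
have E : \sum_(i | P i) \sum_(j | P j) (x i - x j) ^+ 2 = (c * q - s ^+ 2) * 2.
  rewrite (eq_bigr _ (fun i _ => E1 i)) big_split sumrB /= sumr_const -!mulr_suml.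
  rewrite -mulr_sumr -mulr_suml -/s -/q -mulr_natr -/c; ring.
move: H; rewrite E pmulr_lge0 // subr_ge0 //.
Qed.


Lemma levels (T : finType) (Q : pred T) (g : T -> nat) (f : T -> R) m :
  (forall i, 0 <= f i) ->
  \sum_(1 <= k < m.+1) \sum_(i | Q i && (g i == k)) f i <= \sum_(i | Q i && (g i <= m)%N) f i.
Proof.
move=> f0; elim: m => [|m IH].
  by rewrite big_geq // sumr_ge0.
rewrite big_nat_recr //= [X in _ <= X](bigID (fun i => g i <= m)%N) /=.
apply: lerD.
  apply: le_trans IH _; apply: sum_sub => // i; case: (Q i) => //=; lia.
apply: sum_sub => // i; case: (Q i) => //=; lia.
Qed.

Lemma sum_ind (S : pred V) (c : V) (F : V -> R) :
  S c -> \sum_(u | S u) F u * (u == c)%:R = F c.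
Proof.
move=> Sc; rewrite (bigD1 c) //= eqxx mulr1 big1 ?addr0 // => u /andP[_ /negbTE ->].
by rewrite mulr0.
Qed.

Variables (a b : V) (phi : V -> R) (lev pos : V -> nat) (n : nat).
Hypothesis Lap : forall v, glap phi v = (v == a)%:R - (v == b)%:R.
Hypothesis H1a : lev a = 0%N.
Hypothesis H1b : (n <= lev b)%N.
Hypothesis H2 : forall u v, adj u v -> (lev v <= (lev u).+1)%N.
Hypothesis H3 : forall u v, lev u = lev v -> pos u = pos v -> u = v.
Hypothesis H4 : forall u, (pos u <= lev u)%N.
Hypothesis H5 : forall u v, adj u v -> lev v = (lev u).+1 ->
   pos v = pos u \/ pos v = (pos u).+1.

Let D (p : V * V) := phi p.1 - phi p.2.
Let C k (p : V * V) := (adj p.1 p.2 && (lev p.1 < lev p.2)%N) && (lev p.2 == k).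

Lemma cut_card k : (#|C k.+1| <= k.+1 * 2)%N.
Proof.
have -> : (k.+1 * 2)%N = #|{: 'I_k.+1 * bool}| by rewrite card_prod card_ord card_bool.
apply: (@leq_card_in _ _ (fun p : V * V => (inord (pos p.1) : 'I_k.+1, pos p.2 == (pos p.1).+1))).
move=> [u v] [u' v']; rewrite /C /= => /andP[/andP[a1 l1] /eqP e1] /andP[/andP[a2 l2] /eqP e2] [].
have h1 := H2 a1; have h2 := H2 a2; have p1 := H4 u; have p2 := H4 u'.
simpl in *; move=> /(congr1 (@nat_of_ord _)); rewrite !inordK; try lia.
move=> ep; have eu : u = u' by apply: H3 => //; lia.
subst u'.
have q1 := H5 a1 (ltac:(lia)); have q2 := H5 a2 (ltac:(lia)).
move=> eb; have ev : v = v'.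
  apply: H3; first lia.
  case: q1 => q1; case: q2 => q2; move: eb; rewrite q1 q2 ?eqxx; try lia.
by rewrite ev.
Qed.

Lemma cut_bound k : (1 <= k <= n)%N -> (k%:R * 2)^-1 <= \sum_(p | C k p) D p ^+ 2.
Proof.
case: k => [//|k] /andP[_ kn].
have F : \sum_(p | C k.+1 p) D p = 1.
  have e := flow (fun v => lev v < k.+1)%N phi.
  rewrite (eq_bigr (fun u => (u == a)%:R - (u == b)%:R)) in e; last by move=> u _; rewrite Lap.
  rewrite sumrB in e.
  have e1 : \sum_(u | (lev u < k.+1)%N) ((u == a)%:R : R) = 1.
    rewrite (eq_bigr (fun u => 1 * (u == a)%:R)) ?sum_ind //=; first by rewrite H1a.
    by move=> u _; rewrite mul1r.
  have e2 : \sum_(u | (lev u < k.+1)%N) ((u == b)%:R : R) = 0.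
    by apply: big1 => u lu; case: eqP => // eb; move: lu; rewrite eb; lia.
  rewrite e1 e2 subr0 in e; rewrite e /D; apply: eq_bigl => p; rewrite /C.
  case ap: (adj p.1 p.2) => /=; last by rewrite andbF.
  have := H2 ap; lia.
have cs := cauchy (C k.+1) D.
rewrite F expr1n in cs.
have ck := cut_card k.
have q0 : 0 <= \sum_(p | C k.+1 p) D p ^+ 2 by apply: sumr_ge0 => p _; apply: sqr_ge0.
have cs2 : 1 <= (k.+1%:R * 2) * \sum_(p | C k.+1 p) D p ^+ 2.
  apply: le_trans cs _; apply: ler_wpM2r => //.
  by rewrite -natrM ler_nat.
have kp : 0 < (k.+1%:R * 2 : R) by rewrite -natrM ltr0n muln_gt0.
have : (k.+1%:R * 2)^-1 * 1 <= (k.+1%:R * 2)^-1 * ((k.+1%:R * 2) * \sum_(p | C k.+1 p) D p ^+ 2).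
  by apply: ler_wpM2l => //; rewrite invr_ge0 ltW.
by rewrite mulr1 mulrA mulVf ?mul1r // lt0r_neq0.
Qed.

Lemma main_bound : \sum_(1 <= k < n.+1) (k%:R * 2)^-1 <= phi a - phi b.
Proof.
have f0 : forall p, 0 <= D p ^+ 2 by move=> p; apply: sqr_ge0.
have E : \sum_(p | adj p.1 p.2) D p ^+ 2 = (phi a - phi b) * 2.
  rewrite -energy.
  rewrite (eq_bigr (fun u => phi u * (u == a)%:R - phi u * (u == b)%:R)); last first.
    by move=> u _; rewrite Lap mulrBr.
  by rewrite sumrB (@sum_ind xpredT) // (@sum_ind xpredT) // mulr_natr.
have B : (\sum_(p | adj p.1 p.2 && (lev p.1 < lev p.2)%N) D p ^+ 2) * 2
          <= \sum_(p | adj p.1 p.2) D p ^+ 2.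
  rewrite [X in _ <= X](bigID (fun p => lev p.1 < lev p.2)%N) /= mulr_natr mulr2n lerD2l.
  have -> : \sum_(p | adj p.1 p.2 && (lev p.1 < lev p.2)%N) D p ^+ 2 =
            \sum_(p | adj p.1 p.2 && (lev p.2 < lev p.1)%N) D p ^+ 2.
    rewrite (swap_pairs (fun p => adj p.1 p.2 && (lev p.2 < lev p.1)%N)) /=.
    apply: eq_big => [p|p _]; first by rewrite adjC.
    by rewrite /D -sqrrN opprB.
  apply: sum_sub => // p /andP[-> h] /=; lia.
have L := levels (fun p => adj p.1 p.2 && (lev p.1 < lev p.2)%N) (fun p => lev p.2) n f0.
have L2 : \sum_(p | (adj p.1 p.2 && (lev p.1 < lev p.2)%N) && (lev p.2 <= n)%N) D p ^+ 2 <=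
          \sum_(p | adj p.1 p.2 && (lev p.1 < lev p.2)%N) D p ^+ 2.
  by apply: sum_sub => // p /andP[].
have S : \sum_(1 <= k < n.+1) (k%:R * 2)^-1 <= \sum_(1 <= k < n.+1) \sum_(p | C k p) D p ^+ 2.
  rewrite big_nat [X in _ <= X]big_nat; apply: ler_sum => k kn; apply: cut_bound.
  by rewrite ltnS in kn.
have := le_trans S (le_trans L L2).
move: B; rewrite E => B h.
have := le_trans (ler_wpM2r (ler0n R 2) h) B.
by rewrite ler_pM2r // ltr0n.
Qed.
End Gen.


Section Ex.
Variables (R : realFieldType) (V : finType) (adj : rel V).
Hypothesis adjC : symmetric adj.
Hypothesis conn : forall x : V -> R, (forall u w, adj u w -> x u = x w) -> forall u w, x u = x w.

Lemma sum_ev (F : V -> R) : \sum_x F x = \sum_(i < #|V|) F (enum_val i).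
Proof. by rewrite -big_enum_val; apply: eq_bigl => x; rewrite inE. Qed.

Let N := #|V|.
Let ev : 'I_N -> V := enum_val.
Let rk : V -> 'I_N := enum_rank.
Let deg (x : V) : R := \sum_(y | adj x y) 1.
Let Lm : 'M[R]_N := \matrix_(i, j) ((i == j)%:R * deg (ev j) - (adj (ev j) (ev i))%:R).

Lemma evK x : ev (rk x) = x. Proof. exact: enum_rankK. Qed.
Lemma rkK i : rk (ev i) = i. Proof. exact: enum_valK. Qed.

Lemma Lm_lap (w : 'rV[R]_N) j : (w *m Lm) 0 j = glap adj (fun x => w 0 (rk x)) (ev j).
Proof.
rewrite mxE /glap sumrB.
have e1 : \sum_(x | adj (ev j) x) w 0 (rk (ev j)) = w 0 j * deg (ev j).
  by rewrite rkK /deg mulr_sumr; apply: eq_bigr => x _; rewrite mulr1.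
have e2 : \sum_(x | adj (ev j) x) w 0 (rk x) = \sum_i w 0 i * (adj (ev j) (ev i))%:R.
  rewrite big_mkcond sum_ev; apply: eq_bigr => i _; rewrite rkK.
  by case: (adj _ _); rewrite ?mulr1 ?mulr0.
rewrite e1 e2 -[w 0 j * _](_ : \sum_i w 0 i * ((i == j)%:R * deg (ev j)) = _); last first.
  rewrite (bigD1 j) //= eqxx mul1r big1 ?addr0 // => i /negbTE ->.
  by rewrite mul0r mulr0.
rewrite -sumrB; apply: eq_bigr => i _; rewrite !mxE; ring.
Qed.

Lemma ker_const (u : 'rV[R]_N) : u *m Lm = 0 -> forall i j, u 0 i = u 0 j.
Proof.
move=> H; set phi := fun x => u 0 (rk x).
have L0 : forall x, glap adj phi x = 0.
  by move=> x; rewrite -(evK x) -Lm_lap H mxE.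
have E := energy adjC phi.
rewrite big1 ?mul0rn in E; last by move=> x _; rewrite L0 mulr0.
have Z := psumr_eq0P (fun p _ => sqr_ge0 (phi p.1 - phi p.2)) (esym E).
have C : forall x y, adj x y -> phi x = phi y.
  move=> x y axy; have := Z (x, y) axy; rewrite /= => /eqP.
  by rewrite sqrf_eq0 subr_eq0 => /eqP.
move=> i j; have := conn C (ev i) (ev j); by rewrite /phi !rkK.
Qed.

Lemma exists_pot (a b : V) : exists phi : V -> R, forall v, glap adj phi v = (v == a)%:R - (v == b)%:R.
Proof.
have N0 : (0 < N)%N by rewrite /N; apply/card_gt0P; exists a.
set one : 'cV[R]_N := const_mx 1.
set Z := kermx one.
have LZ : (Lm <= Z)%MS.
  apply/sub_kermxP; apply/matrixP => i j; rewrite !mxE.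
  rewrite (eq_bigr (fun k => (k == i)%:R * deg (ev k) - (adj (ev i) (ev k))%:R)); last first.
    by move=> k _; rewrite !mxE mulr1 adjC eq_sym.
  rewrite sumrB (bigD1 i) //= eqxx mul1r big1 ?addr0; last by move=> k /negbTE ->; rewrite mul0r.
  rewrite /deg big_mkcond sum_ev; apply/eqP; rewrite subr_eq0; apply/eqP; apply: eq_bigr => k _.
  by case: (adj _ _).
have rone : \rank one = 1%N.
  apply/eqP; rewrite eqn_leq rank_leq_col lt0n mxrank_eq0; apply/eqP => /matrixP.
  by move=> /(_ (rk a) ord0) /eqP; rewrite !mxE oner_eq0.
have kerL : (kermx Lm <= (const_mx 1 : 'rV[R]_N))%MS.
  apply/row_subP => i.
  have H : row i (kermx Lm) *m Lm = 0 by rewrite -row_mul mulmx_ker row0.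
  move: H; set r := row i (kermx Lm) => H.
  have -> : r = r 0 (rk a) *: const_mx 1.
    by apply/rowP => j; rewrite {1}(ker_const H j (rk a)) !mxE mulr1.
  by rewrite scalemx_sub.
have rk1 : (\rank (kermx Lm) <= 1)%N by apply: leq_trans (mxrankS kerL) (rank_leq_row _).
rewrite mxrank_ker in rk1.
have rZ : \rank Z = (N - 1)%N by rewrite mxrank_ker rone.
have eqLZ : (Lm == Z)%MS.
  by rewrite -(geq_leqif (mxrank_leqif_eq LZ)) rZ; lia.
set v : 'rV[R]_N := \row_j ((ev j == a)%:R - (ev j == b)%:R).
have sum_eq : forall c : V, \sum_x ((x == c)%:R : R) = 1.
  by move=> c; rewrite (bigD1 c) //= eqxx big1 ?addr0 // => x /negbTE ->.
have vZ : (v <= Z)%MS.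
  apply/sub_kermxP; apply/matrixP => i j; rewrite !mxE.
  rewrite (eq_bigr (fun k => (ev k == a)%:R - (ev k == b)%:R)); last first.
    by move=> k _; rewrite !mxE mulr1.
  rewrite -(sum_ev (fun x => (x == a)%:R - (x == b)%:R)) sumrB !sum_eq.
  by rewrite subrr.
have [Dm vD] : exists Dm, v = Dm *m Lm.
  by apply/submxP; move/andP: eqLZ => [_ ZL]; apply: submx_trans vZ ZL.
exists (fun x => Dm 0 (rk x)) => x.
by rewrite -{1}(evK x) -Lm_lap -vD mxE evK.
Qed.

End Ex.


Section Tri.
Variable n : nat.
Definition I (v : tri_vertex n) : nat := nat_of_ord (sval v).1.
Definition J (v : tri_vertex n) : nat := nat_of_ord (sval v).2.

Lemma tvb v : (J v <= I v <= n)%N.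
Proof. by case: v => [[x y] /= h]; rewrite /I /J /= h -ltnS ltn_ord. Qed.

Lemma tv_inj u v : I u = I v -> J u = J v -> u = v.
Proof.
case: u v => [[x1 y1] p] [[x2 y2] q]; rewrite /I /J /= => h1 h2.
apply: val_inj => /=; congr pair; exact: ord_inj.
Qed.

Definition adjN (p q : nat * nat) := tri_step p q || tri_step q p.

Lemma adjE u v : tri_adj u v = adjN (I u, J u) (I v, J v).
Proof. by []. Qed.

Lemma adjC : symmetric (@tri_adj n).
Proof. by move=> u v; rewrite /tri_adj orbC. Qed.

Lemma nb v i j : (j <= i <= n)%N -> adjN (I v, J v) (i, j) ->
  exists w, [/\ I w = i, J w = j & tri_adj v w].
Proof.
move=> h a; have hi : (i < n.+1)%N by lia.
have hj : (j < n.+1)%N by lia.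
have hji : ((Ordinal hj : 'I_n.+1) <= (Ordinal hi : 'I_n.+1))%N by rewrite /=; lia.
by exists (exist _ (Ordinal hi, Ordinal hj) hji).
Qed.

Lemma deg3 v x y z : tri_adj v x -> tri_adj v y -> tri_adj v z ->
  (I x <> I y \/ J x <> J y) -> (I x <> I z \/ J x <> J z) -> (I y <> I z \/ J y <> J z) ->
  (3 <= tri_deg v)%N.
Proof.
move=> ax ay az dxy dxz dyz.
have nxy : x != y by apply/eqP => e; rewrite e in dxy; lia.
have nxz : x != z by apply/eqP => e; rewrite e in dxz; lia.
have nyz : y != z by apply/eqP => e; rewrite e in dyz; lia.
rewrite /tri_deg; apply: leq_trans (subset_leq_card (_ : x |: (y |: [set z]) \subset _)).
  by rewrite !cardsU1 cards1 !inE negb_or nxy nxz nyz.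
by apply/subsetP => w; rewrite !inE => /or3P [] /eqP ->.
Qed.

Ltac side := rewrite /adjN /tri_step /=; lia.

Lemma corner v : (1 <= n)%N -> tri_deg v = 2%N ->
  [\/ I v = 0 /\ J v = 0, I v = n /\ J v = 0 | I v = n /\ J v = n]%N.
Proof.
move=> n1 d2; have bv := tvb v.
have contra : (3 <= tri_deg v)%N -> False by rewrite d2.
case: (ltnP (I v) n) => hi.
  case: (posnP (I v)) => i0; first by apply: Or31; lia.
  have [y [y1 y2 ay]] := @nb v (I v).+1 (J v) ltac:(lia) ltac:(side).
  have [z [z1 z2 az]] := @nb v (I v).+1 (J v).+1 ltac:(lia) ltac:(side).
  case: (ltnP (J v) (I v)) => hj.
    have [x [x1 x2 ax]] := @nb v (I v) (J v).+1 ltac:(lia) ltac:(side).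
    by exfalso; apply: contra; apply: (deg3 ax ay az); lia.
  have [x [x1 x2 ax]] := @nb v (I v) (J v).-1 ltac:(lia) ltac:(side).
  by exfalso; apply: contra; apply: (deg3 ax ay az); lia.
case: (posnP (J v)) => j0; first by apply: Or32; lia.
case: (ltnP (J v) n) => jn; last by apply: Or33; lia.
have [x [x1 x2 ax]] := @nb v n (J v).+1 ltac:(lia) ltac:(side).
have [y [y1 y2 ay]] := @nb v n (J v).-1 ltac:(lia) ltac:(side).
have [z [z1 z2 az]] := @nb v n.-1 (J v) ltac:(lia) ltac:(side).
by exfalso; apply: contra; apply: (deg3 ax ay az); lia.
Qed.

Lemma ex_v i j : (j <= i <= n)%N -> exists w, I w = i /\ J w = j.
Proof.
move=> h; have hi : (i < n.+1)%N by lia.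
have hj : (j < n.+1)%N by lia.
have hji : ((Ordinal hj : 'I_n.+1) <= (Ordinal hi : 'I_n.+1))%N by rewrite /=; lia.
by exists (exist _ (Ordinal hi, Ordinal hj) hji).
Qed.

Lemma conn (T : Type) (x : tri_vertex n -> T) :
  (forall u w, tri_adj u w -> x u = x w) -> forall u w, x u = x w.
Proof.
move=> H.
have [o [o1 o2]] := @ex_v 0 0 ltac:(lia).
suff S : forall i j, (j <= i <= n)%N -> forall w, I w = i -> J w = j -> x w = x o.
  by move=> u w; rewrite (S _ _ (tvb u) u) // (S _ _ (tvb w) w).
elim=> [|i IH] j hj w wi wj.
  by rewrite (@tv_inj w o) //; lia.
elim: j hj w wi wj => [|j IHj] hj w wi wj.
  have [w' [w1 w2]] := @ex_v i 0 ltac:(lia).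
  rewrite (H w w'); first by apply: (IH 0%N) => //; lia.
  by rewrite adjE wi wj w1 w2; side.
have [w' [w1 w2]] := @ex_v i.+1 j ltac:(lia).
rewrite (H w w'); first by apply: IHj => //; lia.
by rewrite adjE wi wj w1 w2; side.
Qed.
End Tri.

Ltac tt := rewrite ?adjE /adjN /tri_step /=; lia.

Theorem mainTheorem5 (R : realFieldType) (n : nat) (a b : tri_vertex n) :
  (1 <= n)%N -> a != b -> tri_deg a = 2%N -> tri_deg b = 2%N ->
  resistance_ge a b (2^-1 * harmonic R n).
Proof.
move=> n1 ab da db; split.
  have [phi Hphi] := exists_pot (@adjC n) (@conn n R) a b.
  by exists phi.
move=> phi Hphi.
have eh : 2^-1 * harmonic R n = \sum_(1 <= k < n.+1) (k%:R * 2)^-1.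
  by rewrite /harmonic mulr_sumr; apply: eq_bigr => k _; rewrite invfM mulrC.
rewrite eh.
have nab : ~ (I a = I b /\ J a = J b).
  by move=> [h1 h2]; move/eqP: ab; apply; apply: tv_inj.
have ba := tvb a; have bb := tvb b.
have ca := corner n1 da.
have cb : ((I b = 0 /\ J b = 0) \/ (I b = n /\ J b = 0) \/ (I b = n /\ J b = n))%N.
  by case: (corner n1 db); tauto.
have Lap : forall v, glap (@tri_adj n) phi v = (v == a)%:R - (v == b)%:R := Hphi.
case: ca => [[a1 a2]|[a1 a2]|[a1 a2]].
- apply: (@main_bound _ _ _ (@adjC n) a b phi (@I n) (@J n) n Lap).
  + by [].
  + lia.
  + move=> u v; have := tvb u; have := tvb v; tt.
  + move=> u v h1 h2; apply: tv_inj => //.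
  + by move=> u; have := tvb u; lia.
  + move=> u v; have := tvb u; have := tvb v; tt.
- apply: (@main_bound _ _ _ (@adjC n) a b phi (fun v => n - I v + J v)%N (@J n) n Lap).
  + lia.
  + lia.
  + move=> u v; have := tvb u; have := tvb v; tt.
  + move=> u v h1 h2; have := tvb u; have := tvb v; move=> *; apply: tv_inj; lia.
  + by move=> u; have := tvb u; lia.
  + move=> u v; have := tvb u; have := tvb v; tt.
- apply: (@main_bound _ _ _ (@adjC n) a b phi (fun v => n - J v)%N (fun v => n - I v)%N n Lap).
  + lia.
  + lia.
  + move=> u v; have := tvb u; have := tvb v; tt.
  + move=> u v h1 h2; have := tvb u; have := tvb v; move=> *; apply: tv_inj; lia.
  + by move=> u; have := tvb u; lia.
  + move=> u v; have := tvb u; have := tvb v; tt.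
Qed.
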